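(* Let $(\bm n;\bm m)\in\mathfrak C_{2r}$ with $\bm n\neq-\bm m$. Then each of the following four statements is equivalent to $\det T_{\bm n;\bm m}\neq 0$: (i) there exists a unique Laurent polynomial $\Phi(z)=z^{|\bm n|}+\dots+\alpha z^{-|\bm m|}$ (i.e. $\Phi\in\operatorname{span}\{z^k\}_{k=-|\bm m|}^{|\bm n|}$ with $z^{|\bm n|}$-coefficient $1$) such that $L_j[\Phi(w)w^{-k}]=0$ for all $-m_j\le k\le n_j-1$ and $1\le j\le r$; (ii) there exists a unique Laurent polynomial $\Phi^*(z)=\beta z^{|\bm n|}+\dots+z^{-|\bm m|}$ (i.e. $\Phi^*\in\operatorname{span}\{z^k\}_{k=-|\bm m|}^{|\bm n|}$ with $z^{-|\bm m|}$-coefficient $1$) such that $L_j[\Phi^*(w)w^{-k}]=0$ for all $-m_j+1\le k\le n_j$ and $1\le j\le r$; (iii) there exists a unique vector $(\Xi_1,\dots,\Xi_r)$ of Laurent polynomials with $\Xi_j\in\operatorname{span}\{z^k\}_{k=-n_j}^{m_j-1}$ such that $\sum_{j=1}^r L_j[\Xi_j(w)w^{-k}]=0$ for $-|\bm n|+1\le k\le |\bm m|-1$ and $\sum_{j=1}^r L_j[\Xi_j(w)w^{|\bm n|}]=1$; (iv) there exists a unique vector $(\Xi^*_1,\dots,\Xi^*_r)$ of Laurent polynomials with $\Xi^*_j\in\operatorname{span}\{z^k\}_{k=-n_j+1}^{m_j}$ such that $\sum_{j=1}^r L_j[\Xi^*_j(w)w^{-k}]=0$ for $-|\bm n|+1\le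 k\le |\bm m|-1$ and $\sum_{j=1}^r L_j[\Xi^*_j(w)w^{-|\bm m|}]=1$.
   Context: Fix $r\ge1$. For $\bm v=(v_1,\dots,v_r)\in\mathbb Z^r$, $|\bm v|:=v_1+\dots+v_r$ (signed sum, no absolute values). Let $c_{k,j}\in\mathbb C$ ($k\in\mathbb Z$, $j=1,\dots,r$) be arbitrary complex numbers and let $L_j$ be the linear functional on the space of complex Laurent polynomials in $w$ determined by $L_j[w^{-k}]=c_{k,j}$ for all $k\in\mathbb Z$. Let $\mathfrak C_{2r}=\{(\bm n;\bm m)\in\mathbb Z^r\times\mathbb Z^r: n_j+m_j\ge 0 \text{ for all } j\}$. For $(\bm n;\bm m)\in\mathfrak C_{2r}$ with $\bm n\ne-\bm m$, $T_{\bm n;\bm m}$ denotes the $(|\bm n|+|\bm m|)\times(|\bm n|+|\bm m|)$ matrix whose rows are indexed by the pairs $(j,k)$ with $1\le j\le r$, $-m_j\le k\le n_j-1$ (ordered first by $j$, then by increasing $k$; a block is empty if $n_j=-m_j$), whose columns are indexed by $i=-|\bm m|,\dots,|\bm n|-1$ in increasing order, and whose $((j,k),i)$ entry is $c_{k-i,j}$. *)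

(* Defs.v *)
From HB Require Import structures.
From mathcomp Require Import all_boot all_order all_algebra.
From mathcomp Require Import complex.
From mathcomp Require Import reals.
Set Implicit Arguments. Unset Strict Implicit. Unset Printing Implicit Defensive.
Import Order.TTheory GRing.Theory Num.Theory.
Local Open Scope ring_scope.

Definition zrange (a b : int) : seq int :=
  if a <= b then mkseq (fun i => a + (i%:Z)) (absz (b - a + 1)) else [::].

(* A (complex) Laurent polynomial p(z) = sum_k p_k z^k is represented by its
   coefficient function k |-> p_k (with finite support).
   in_span a b p <-> p lies in span{z^k}_{k=a}^{b}. *)
Definition in_span (K : Type) (zero : K) (a b : int) (p : int -> K) : Prop :=
  forall k : int, (k < a) || (b < k) -> p k = zero.

Section Laurent.
Variable R : realType.
Local Notation C := (R[i]).

(* p(w) * w^s *)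
Definition mulXz (p : int -> C) (s : int) : int -> C := fun k => p (k - s).

(* L_j, determined by L_j[w^{-k}] = c_{k,j}, applied (by linearity) to a Laurent
   polynomial p lying in span{w^k}_{k=a}^{b}:  L_j[p] = sum_{k=a}^{b} p_k c_{-k,j}. *)
Definition Lapp (r : nat) (c : int -> 'I_r -> C) (j : 'I_r) (a b : int)
  (p : int -> C) : C :=
  \sum_(k <- zrange a b) p k * c (- k) j.

Definition vsum (r : nat) (v : 'I_r -> int) : int := \sum_(j < r) v j.

Definition T_rows (r : nat) (n m : 'I_r -> int) : seq ('I_r * int) :=
  flatten [seq [seq (j, k) | k <- zrange (- m j) (n j - 1)] | j <- enum 'I_r].

(* T_{n;m}: (|n|+|m|) x (|n|+|m|) matrix; row p is the p-th label (j,k) of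
   T_rows, column q corresponds to i = -|m| + q; entry c_{k-i,j}. *)
Definition Tmat (r : nat) (c : int -> 'I_r -> C) (n m : 'I_r -> int) :
  'M[C]_(absz (vsum n + vsum m)) :=
  \matrix_(p, q)
    (if nth None [seq Some x | x <- T_rows n m] p is Some (j, k)
     then c (k - (- vsum m + (q : nat)%:Z)) j else 0).

End Laurent.

(* Main.v *)
Require Import Defs.
From mathcomp Require Import zify.
From HB Require Import structures.
From mathcomp Require Import all_boot all_order all_algebra.
From mathcomp Require Import complex.
From mathcomp Require Import reals.
From mathcomp Require Import ring lra.
From Stdlib Require Import FunctionalExtensionality.
Import Order.TTheory GRing.Theory Num.Theory.
Local Open Scope ring_scope.
Set Implicit Arguments. Unset Strict Implicit. Unset Printing Implicit Defensive.

Lemma uniq_sol (F : fieldType) S (A : 'M[F]_S) (b : 'rV_S) :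
  (exists! x : 'rV_S, x *m A = b) <-> \det A != 0.
Proof.
split.
- case=> x [hx hu]; apply/negP => /det0P [v vn0 hv].
  have e := hu (x + v); rewrite mulmxDl hx hv addr0 in e.
  have : x + 0 = x + v by rewrite addr0 -e.
  by move/addrI => e2; rewrite -e2 eqxx in vn0.
- move=> hd; have hu : A \in unitmx by rewrite unitmxE unitfE.
  exists (b *m invmx A); split; first by rewrite mulmxKV.
  by move=> y <-; rewrite mulmxK.
Qed.

Lemma frame (U : Type) (F : fieldType) S (A : 'M[F]_S) b (P : U -> Prop)
  (enc : 'rV_S -> U) (dec : U -> 'rV_S) :
  (forall x, P (enc x) <-> x *m A = b) -> (forall x, dec (enc x) = x) ->
  (forall f, P f -> enc (dec f) = f) -> ((exists! f, P f) <-> \det A != 0).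
Proof.
move=> hP hde hed; rewrite -uniq_sol; split.
- case=> f [hf hu]; exists (dec f); split.
    by apply/hP; rewrite hed.
  by move=> y /hP hy; rewrite (hu _ hy) hde.
- case=> x [hx hu]; exists (enc x); split; first exact/hP.
  move=> g hg; rewrite -(hed _ hg); congr enc; apply: hu; apply/hP.
  by rewrite hed.
Qed.

Lemma zrange_sum (V : nmodType) a b (k : nat) (F : int -> V) :
  b = a + k%:Z - 1 -> \sum_(i <- zrange a b) F i = \sum_(q < k) F (a + q%:Z).
Proof.
move=> ->; rewrite /zrange; case: ifP => h.
- have -> : absz (a + k%:Z - 1 - a + 1) = k by lia.
  rewrite /mkseq big_map.
  have -> : iota 0 k = index_iota 0 k by rewrite /index_iota subn0.
  by rewrite big_mkord.
- have -> : k = 0%N by lia.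
  by rewrite big_nil big_ord0.
Qed.

Lemma mem_zrange a b x : (x \in zrange a b) = (a <= x <= b).
Proof.
rewrite /zrange; case: ifP => h.
- apply/mapP/idP.
  + by case=> i; rewrite mem_iota => hi ->; lia.
  + move=> hx; exists (absz (x - a)); first by rewrite mem_iota; lia.
    lia.
- by rewrite in_nil; lia.
Qed.

Lemma uniq_zrange a b : uniq (zrange a b).
Proof.
rewrite /zrange; case: ifP => // _; apply: mkseq_uniq => i j /eqP h.
by apply/eqP; lia.
Qed.

Lemma size_zrange (a b : int) : a <= b + 1 -> size (zrange a b) = absz (b - a + 1).
Proof. move=> hab; rewrite /zrange; case: ifP => h; rewrite ?size_mkseq //. move/negbT: h => /=; lia. Qed.

Lemma zrange_rev (V : nmodType) (a b a' b' d : int) (F : int -> V) :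
  a <= b + 1 -> a' = d - b -> b' = d - a ->
  \sum_(l <- zrange a b) F l = \sum_(k <- zrange a' b') F (d - k).
Proof.
move=> hab ha hb.
rewrite (@zrange_sum _ a b (absz (b - a + 1))); last by lia.
rewrite (@zrange_sum _ a' b' (absz (b - a + 1))); last by lia.
rewrite (reindex_inj rev_ord_inj) /=; apply: eq_bigr => q _; congr F.
have := ltn_ord q; move: (nat_of_ord q) => qq hq.
rewrite ha; lia.
Qed.

Section Sh.
Variable R : realType.
Local Notation C := (R[i]).
Lemma Lapp_shift r (c : int -> 'I_r -> C) j a b s (p : int -> C) :
  Lapp c j (a + s) (b + s) (mulXz p s) =
  \sum_(i <- zrange a b) p i * c (- (i + s)) j.
Proof.
rewrite /Lapp.
have -> : zrange (a + s) (b + s) = [seq i + s | i <- zrange a b].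
  rewrite /zrange; have -> : (a + s <= b + s) = (a <= b) by rewrite lerD2r.
  case: ifP => // _.
  have -> : b + s - (a + s) + 1 = b - a + 1 by ring.
  by rewrite /mkseq -map_comp; apply: eq_map => i /=; ring.
by rewrite big_map; apply: eq_bigr => i _; rewrite /mulXz addrK.
Qed.
End Sh.

Section Rows.
Variables (r : nat) (n m : 'I_r -> int).
Hypothesis hnm : forall j, 0 <= n j + m j.
Variable x0 : 'I_r * int.
Local Notation S := (absz (vsum n + vsum m)).
Local Notation T := (T_rows n m).

Lemma vsumD : vsum n + vsum m = \sum_j (n j + m j).
Proof. by rewrite /vsum big_split. Qed.

Lemma S_int : (S%:Z = vsum n + vsum m).
Proof. by rewrite gez0_abs // vsumD sumr_ge0. Qed.

Lemma size_T : size T = S.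
Proof.
rewrite /T_rows size_allpairs_dep sumnE big_map big_enum /=.
have h : \sum_j (n j + m j) = Posz (\sum_j absz (n j + m j)%R)%N.
  rewrite (big_morph Posz PoszD erefl); apply: eq_bigr => j _.
  by rewrite gez0_abs.
rewrite vsumD h absz_nat; apply: eq_bigr => j _; rewrite size_zrange //.
  by congr absz; ring.
by have := hnm j; lia.
Qed.

Lemma mem_T j k : ((j, k) \in T) = (- m j <= k <= n j - 1).
Proof.
apply/allpairsPdep/idP.
- by case=> j' [k' [_ hk [-> ->]]]; rewrite -mem_zrange.
- by move=> h; exists j, k; split; rewrite ?mem_enum ?mem_zrange.
Qed.

Lemma uniq_T : uniq T.
Proof.
apply: allpairs_uniq_dep; first exact: enum_uniq.
  by move=> j _; exact: uniq_zrange.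
by move=> [x1 y1] [x2 y2] _ _ /= [-> ->].
Qed.

Definition lab (p : 'I_S) := nth x0 T p.

Lemma lab_mem p : lab p \in T.
Proof. by rewrite /lab mem_nth // size_T. Qed.

Lemma lab_inj : injective lab.
Proof.
move=> p1 p2; rewrite /lab => /eqP; rewrite nth_uniq ?size_T ?uniq_T //.
by move=> /eqP h; apply/val_inj.
Qed.

Lemma lab_surj t : t \in T -> exists p, lab p = t.
Proof.
move=> ht; have hi : (index t T < S)%N by rewrite -size_T index_mem.
by exists (Ordinal hi); rewrite /lab nth_index.
Qed.

Lemma forall_rows (P : 'I_r -> int -> Prop) :
  (forall j k, - m j <= k <= n j - 1 -> P j k) <->
  (forall p, P (lab p).1 (lab p).2).
Proof.
split.
- move=> h p; apply: h; have := lab_mem p; case: (lab p) => j k.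
  by rewrite mem_T.
- move=> h j k; rewrite -mem_T => /lab_surj [p hp].
  by have := h p; rewrite hp.
Qed.

Lemma sum_rows (V : nmodType) (G : 'I_r -> int -> V) :
  \sum_j \sum_(k <- zrange (- m j) (n j - 1)) G j k =
  \sum_p G (lab p).1 (lab p).2.
Proof.
transitivity (\sum_(t <- T) G t.1 t.2).
  by rewrite /T_rows big_allpairs_dep /= big_enum.
rewrite (big_nth x0) big_mkord /lab.
rewrite size_T. done.
Qed.
End Rows.

Section Main.
Variable R : realType.
Local Notation C := (R[i]).
Variables (r : nat) (c : int -> 'I_r -> C) (n m : 'I_r -> int).
Hypothesis hnm : forall j, 0 <= n j + m j.
Variable x0 : 'I_r * int.
Local Notation S := (absz (vsum n + vsum m)).
Local Notation T := (T_rows n m).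
Local Notation L p := (lab (n:=n) (m:=m) x0 p).
Local Notation N := (vsum n).
Local Notation M := (vsum m).

Lemma Tmat_E p q : Tmat c n m p q = c ((L p).2 - (- M + (q : nat)%:Z)) (L p).1.
Proof.
rewrite mxE (nth_map x0) ?(size_T hnm) // /lab; by case: (nth x0 _ _).
Qed.

Lemma sum_lab_in (g : 'I_S -> C) p0 :
  \sum_p (if L p == L p0 then g p else 0) = g p0.
Proof.
rewrite (bigD1 p0) //= eqxx big1 ?addr0 // => p hp.
by rewrite ifF //; apply/negbTE; apply: contra hp => /eqP /(lab_inj hnm) ->.
Qed.

Lemma sum_lab_out (g : 'I_S -> C) t : t \notin T ->
  \sum_p (if L p == t then g p else 0) = 0.
Proof.
move=> ht; rewrite big1 // => p _; rewrite ifF //; apply/negbTE.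
by apply: contra ht => /eqP <-; exact: (lab_mem hnm).
Qed.

Definition encd (d : int) (x : 'rV[C]_S) (j : 'I_r) (l : int) : C :=
  \sum_p (if L p == (j, d - l) then x 0 p else 0).
Definition decd (d : int) (f : 'I_r -> int -> C) : 'rV[C]_S :=
  \row_p f (L p).1 (d - (L p).2).

Lemma encd_at d x p : encd d x (L p).1 (d - (L p).2) = x 0 p.
Proof.
rewrite /encd; have -> : ((L p).1, d - (d - (L p).2)) = L p.
  by case: (L p) => a b /=; congr pair; ring.
exact: sum_lab_in.
Qed.

Lemma decdK d x : decd d (encd d x) = x.
Proof. by apply/rowP => p; rewrite mxE encd_at. Qed.

Lemma encd_out d x j l : ~~ (- m j <= d - l <= n j - 1) -> encd d x j l = 0.
Proof. by move=> h; rewrite /encd sum_lab_out // mem_T. Qed.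

Lemma encdK d f : (forall j l, ~~ (- m j <= d - l <= n j - 1) -> f j l = 0) ->
  encd d (decd d f) = f.
Proof.
move=> hf; apply: functional_extensionality => j.
apply: functional_extensionality => l.
case: (boolP ((j, d - l) \in T)) => hin.
- have [p hp] := lab_surj hnm x0 hin.
  rewrite /encd -hp sum_lab_in mxE hp /=; congr f; ring.
- rewrite /encd sum_lab_out // hf //; by rewrite -mem_T.
Qed.

Lemma sumLapp d (a b : 'I_r -> int) s x :
  (forall j, a j = d - (n j - 1)) -> (forall j, b j = d + m j) ->
  \sum_j Lapp c j (a j + s) (b j + s) (mulXz (encd d x j) s) =
  \sum_p x 0 p * c (- ((d - (L p).2) + s)) (L p).1.
Proof.
move=> ha hb.
transitivity (\sum_j \sum_(k <- zrange (- m j) (n j - 1))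
     encd d x j (d - k) * c (- ((d - k) + s)) j).
  apply: eq_bigr => j _; rewrite Lapp_shift.
  apply: zrange_rev; rewrite ?ha ?hb; try ring.
  by have := hnm j; lia.
rewrite (sum_rows hnm x0 (fun j k => encd d x j (d - k) * c (- ((d - k) + s)) j)).
by apply: eq_bigr => p _; rewrite encd_at.
Qed.


Lemma natbE (bb : bool) : bb%:R = (if bb then 1 else 0) :> C.
Proof. by case: bb. Qed.

Lemma addr_eq0P (a b : C) : a + b = 0 <-> a = - b.
Proof.
split => h; first by rewrite -[a](addrK b) h sub0r.
by rewrite h addNr.
Qed.

Hypothesis hS : (0 < S)%N.

Lemma case3 : (\det (Tmat c n m) != 0) <->
  (exists! Xi : 'I_r -> int -> C,
     [/\ forall j, in_span 0 (- n j) (m j - 1) (Xi j),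
         forall k : int, - N + 1 <= k <= M - 1 ->
           \sum_(j < r) Lapp c j (- n j - k) (m j - 1 - k)
                           (mulXz (Xi j) (- k)) = 0 &
         \sum_(j < r) Lapp c j (- n j + N) (m j - 1 + N)
                         (mulXz (Xi j) N) = 1]).
Proof.
apply: iff_sym.
pose b := \row_(q < S) ((q : nat) == S.-1)%:R : 'rV[C]_S.
have hSi := S_int hnm.
apply: (@frame _ _ _ (Tmat c n m) b _ (encd (-1)) (decd (-1))).
- move=> x.
  pose E := fun s => \sum_p x 0 p * c (- ((-1 - (L p).2) + s)) (L p).1.
  have eE : forall s, \sum_j Lapp c j (- n j + s) (m j - 1 + s)
                (mulXz (encd (-1) x j) s) = E s.
    move=> s; apply: (sumLapp (a := fun j => - n j) (b := fun j => m j - 1)) => j;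
    ring.
  have xT : forall q : 'I_S, (x *m Tmat c n m) 0 q = E (1 - M + (q : nat)%:Z).
    move=> q; rewrite mxE; apply: eq_bigr => p _; rewrite Tmat_E.
    congr (_ * c _ _); ring.
  split.
  + case=> _ h1 h2; apply/rowP => q; rewrite xT mxE natbE.
    case: (eqVneq (q : nat) S.-1) => hq.
    * have -> : 1 - M + (q : nat)%:Z = N by lia.
      by rewrite -eE.
    * have hk : - N + 1 <= M - 1 - (q : nat)%:Z <= M - 1.
        by have := ltn_ord q; lia.
      have := h1 _ hk; rewrite eE.
      by have -> : - (M - 1 - (q : nat)%:Z) = 1 - M + (q : nat)%:Z by ring.
  + move=> hx; split.
    * move=> j l hl; apply: encd_out; lia.
    * move=> k hk; rewrite eE.
      have hq : (absz (M - 1 - k)%R < S)%N by lia.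
      have := congr1 (fun v : 'rV[C]_S => v 0 (Ordinal hq)) hx; rewrite /= xT mxE natbE /=.
      have -> : 1 - M + Posz (absz (M - 1 - k)%R) = - k by lia.
      by move=> ->; rewrite ifF //; lia.
    * have hq : (S.-1 < S)%N by lia.
      have := congr1 (fun v : 'rV[C]_S => v 0 (Ordinal hq)) hx; rewrite /= xT mxE natbE /=.
      have -> : 1 - M + (S.-1)%:Z = N by lia.
      by rewrite eE eqxx.
- by move=> x; exact: decdK.
- move=> f [hf _ _]; apply: encdK => j l hl; apply: hf; lia.
Qed.


Lemma case4 : (\det (Tmat c n m) != 0) <->
  (exists! Xis : 'I_r -> int -> C,
     [/\ forall j, in_span 0 (- n j + 1) (m j) (Xis j),
         forall k : int, - N + 1 <= k <= M - 1 ->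
           \sum_(j < r) Lapp c j (- n j + 1 - k) (m j - k)
                           (mulXz (Xis j) (- k)) = 0 &
         \sum_(j < r) Lapp c j (- n j + 1 - M) (m j - M)
                         (mulXz (Xis j) (- M)) = 1]).
Proof.
apply: iff_sym.
pose b := \row_(q < S) ((q : nat) == 0%N)%:R : 'rV[C]_S.
have hSi := S_int hnm.
apply: (@frame _ _ _ (Tmat c n m) b _ (encd 0) (decd 0)).
- move=> x.
  pose E := fun s => \sum_p x 0 p * c (- ((0 - (L p).2) + s)) (L p).1.
  have eE : forall s, \sum_j Lapp c j (- n j + 1 + s) (m j + s)
                (mulXz (encd 0 x j) s) = E s.
    move=> s; apply: (sumLapp (a := fun j => - n j + 1) (b := fun j => m j)) => j;
    ring.
  have xT : forall q : 'I_S, (x *m Tmat c n m) 0 q = E ((q : nat)%:Z - M).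
    move=> q; rewrite mxE; apply: eq_bigr => p _; rewrite Tmat_E.
    congr (_ * c _ _); ring.
  split.
  + case=> _ h1 h2; apply/rowP => q; rewrite xT mxE natbE.
    case: (eqVneq (q : nat) 0%N) => hq.
    * rewrite hq -eE. by rewrite add0r.
    * have hk : - N + 1 <= M - (q : nat)%:Z <= M - 1.
        by have := ltn_ord q; lia.
      have := h1 _ hk; rewrite eE.
      by have -> : - (M - (q : nat)%:Z) = (q : nat)%:Z - M by ring.
  + move=> hx; split.
    * move=> j l hl; apply: encd_out; lia.
    * move=> k hk; rewrite eE.
      have hq : (absz (M - k)%R < S)%N by lia.
      have := congr1 (fun v : 'rV[C]_S => v 0 (Ordinal hq)) hx; rewrite /= xT mxE natbE /=.
      have -> : Posz (absz (M - k)%R) - M = - k by lia.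
      by move=> ->; rewrite ifF //; lia.
    * have := congr1 (fun v : 'rV[C]_S => v 0 (Ordinal hS)) hx; rewrite /= xT mxE natbE /=.
      by rewrite add0r eE.
- by move=> x; exact: decdK.
- move=> f [hf _ _]; apply: encdK => j l hl; apply: hf; lia.
Qed.


Definition encp (e z : int) (x : 'rV[C]_S) (i : int) : C :=
  \sum_(q < S) (if e + (q : nat)%:Z == i then x 0 q else 0) + (i == z)%:R.
Definition decp (e : int) (f : int -> C) : 'rV[C]_S := \row_(q < S) f (e + (q : nat)%:Z).

Section Encp.
Variables (e z : int).
Hypothesis hz : forall q : 'I_S, e + (q : nat)%:Z != z.

Lemma encp_at x (q : 'I_S) : encp e z x (e + (q : nat)%:Z) = x 0 q.
Proof.
rewrite /encp (bigD1 q) //= eqxx big1 ?add0r.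
  by rewrite natbE ifF ?addr0 //; apply/negbTE/hz.
move=> q' hq'; rewrite ifF //; apply/negbTE; apply: contra hq' => /eqP h.
by apply/eqP/val_inj; move: h => /addrI [].
Qed.

Lemma encp_z x : encp e z x z = 1.
Proof.
rewrite /encp eqxx big1 ?add0r // => q _; rewrite ifF //; apply/negbTE/hz.
Qed.

Lemma encp_out x i : i != z -> ~~ (e <= i < e + (S : nat)%:Z) -> encp e z x i = 0.
Proof.
move=> h1 h2; rewrite /encp natbE ifF ?addr0; last by apply/negbTE.
rewrite big1 // => q _; rewrite ifF //; have := ltn_ord q; lia.
Qed.

Lemma decpK x : decp e (encp e z x) = x.
Proof. by apply/rowP => q; rewrite mxE encp_at. Qed.

Lemma encpK f : f z = 1 -> (forall i, i != z -> ~~ (e <= i < e + (S : nat)%:Z) -> f i = 0) ->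
  encp e z (decp e f) = f.
Proof.
move=> h1 h2; apply: functional_extensionality => i.
case: (eqVneq i z) => [->|hiz]; first by rewrite encp_z.
case: (boolP (e <= i < e + (S : nat)%:Z)) => hi; last by rewrite encp_out // h2.
have hq : (absz (i - e)%R < S)%N by lia.
have -> : i = e + (Ordinal hq : nat)%:Z by rewrite /=; lia.
by rewrite encp_at mxE.
Qed.
End Encp.

Lemma case1 : (\det (Tmat c n m) != 0) <->
  (exists! Phi : int -> C,
     [/\ in_span 0 (- M) N Phi, Phi N = 1 &
         forall (j : 'I_r) (k : int), - m j <= k <= n j - 1 ->
           Lapp c j (- M - k) (N - k) (mulXz Phi (- k)) = 0]).
Proof.
apply: iff_sym; rewrite -det_tr.
pose b := \row_p (- c ((L p).2 - N) (L p).1) : 'rV[C]_S.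
have hSi := S_int hnm.
have hz : forall q : 'I_S, - M + (q : nat)%:Z != N.
  by move=> q; have := ltn_ord q; lia.
apply: (@frame _ _ _ (Tmat c n m)^T b _ (encp (- M) N) (decp (- M))).
- move=> x.
  have eq1 : forall j k, Lapp c j (- M - k) (N - k) (mulXz (encp (- M) N x) (- k)) =
     \sum_q x 0 q * c (k - (- M + (q : nat)%:Z)) j + c (k - N) j.
    move=> j k; rewrite Lapp_shift (@zrange_sum _ _ _ S.+1); last by lia.
    rewrite big_ord_recr /=; congr (_ + _).
      apply: eq_bigr => q _; rewrite encp_at //; congr (_ * c _ _); ring.
    have -> : - M + (S : nat)%:Z = N by lia.
    rewrite encp_z // mul1r; congr (c _ _); ring.
  have xT : forall p : 'I_S, (x *m (Tmat c n m)^T) 0 p =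
      \sum_q x 0 q * c ((L p).2 - (- M + (q : nat)%:Z)) (L p).1.
    by move=> p; rewrite mxE; apply: eq_bigr => q _; rewrite mxE Tmat_E.
  split.
  + case=> _ _ h; apply/rowP => p; rewrite xT mxE.
    have hr : - m (L p).1 <= (L p).2 <= n (L p).1 - 1.
      by rewrite -mem_T -surjective_pairing; exact: (lab_mem hnm).
    by apply/addr_eq0P; rewrite -eq1; apply: h.
  + move=> hx; split.
    * move=> i hi; apply: encp_out => //; lia.
    * exact: encp_z.
    * move=> j k hk; rewrite eq1.
      have hin : (j, k) \in T by rewrite mem_T.
      have [p hp] := lab_surj hnm x0 hin.
      have := congr1 (fun v : 'rV[C]_S => v 0 p) hx; rewrite /= xT mxE hp /=.
      by move/addr_eq0P.
- by move=> x; exact: decpK.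
- move=> f [hf h1 _]; apply: encpK => // i hi1 hi2; apply: hf; lia.
Qed.

Lemma case2 : (\det (Tmat c n m) != 0) <->
  (exists! Phis : int -> C,
     [/\ in_span 0 (- M) N Phis, Phis (- M) = 1 &
         forall (j : 'I_r) (k : int), - m j + 1 <= k <= n j ->
           Lapp c j (- M - k) (N - k) (mulXz Phis (- k)) = 0]).
Proof.
apply: iff_sym; rewrite -det_tr.
pose b := \row_p (- c ((L p).2 + 1 + M) (L p).1) : 'rV[C]_S.
have hSi := S_int hnm.
have hz : forall q : 'I_S, - M + 1 + (q : nat)%:Z != - M.
  by move=> q; lia.
apply: (@frame _ _ _ (Tmat c n m)^T b _ (encp (- M + 1) (- M)) (decp (- M + 1))).
- move=> x.
  have eq1 : forall j k, Lapp c j (- M - k) (N - k)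
       (mulXz (encp (- M + 1) (- M) x) (- k)) =
     \sum_q x 0 q * c (k - 1 - (- M + (q : nat)%:Z)) j + c (k + M) j.
    move=> j k; rewrite Lapp_shift (@zrange_sum _ _ _ S.+1); last by lia.
    rewrite big_ord_recl /= addrC; congr (_ + _).
      apply: eq_bigr => q _; 
      have -> : - M + (q.+1 : nat)%:Z = - M + 1 + (q : nat)%:Z by lia.
      rewrite encp_at //; congr (_ * c _ _); ring.
    rewrite addr0 encp_z // mul1r; congr (c _ _); ring.
  have xT : forall p : 'I_S, (x *m (Tmat c n m)^T) 0 p =
      \sum_q x 0 q * c ((L p).2 - (- M + (q : nat)%:Z)) (L p).1.
    by move=> p; rewrite mxE; apply: eq_bigr => q _; rewrite mxE Tmat_E.
  split.
  + case=> _ _ h; apply/rowP => p; rewrite xT mxE.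
    have hr : - m (L p).1 <= (L p).2 <= n (L p).1 - 1.
      by rewrite -mem_T -surjective_pairing; exact: (lab_mem hnm).
    apply/addr_eq0P; have hk : - m (L p).1 + 1 <= (L p).2 + 1 <= n (L p).1 by lia.
    by have := h (L p).1 ((L p).2 + 1) hk; rewrite eq1 addrK.
  + move=> hx; split.
    * move=> i hi; apply: encp_out => //; lia.
    * exact: encp_z.
    * move=> j k hk; rewrite eq1.
      have hin : (j, k - 1) \in T by rewrite mem_T; lia.
      have [p hp] := lab_surj hnm x0 hin.
      have := congr1 (fun v : 'rV[C]_S => v 0 p) hx; rewrite /= xT mxE hp /=.
      by rewrite subrK; move/addr_eq0P.
- by move=> x; exact: decpK.
- move=> f [hf h1 _]; apply: encpK => // i hi1 hi2; apply: hf; lia.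
Qed.

End Main.




Unset Implicit Arguments.
Theorem proposition2p1 (R : realType) (r : nat) (c : int -> 'I_r -> R[i])
  (n m : 'I_r -> int) :
  (0 < r)%N ->
  (forall j, 0 <= n j + m j) ->
  ~ (forall j, n j = - m j) ->
  let N := vsum n in
  let M := vsum m in
  let D := \det (Tmat c n m) != 0 in
  [/\
   (* (i) *)
   D <-> (exists! Phi : int -> R[i],
            [/\ in_span 0 (- M) N Phi, Phi N = 1 &
                forall (j : 'I_r) (k : int), - m j <= k <= n j - 1 ->
                  Lapp c j (- M - k) (N - k) (mulXz Phi (- k)) = 0]),
   (* (ii) *)
   D <-> (exists! Phis : int -> R[i],
            [/\ in_span 0 (- M) N Phis, Phis (- M) = 1 &
                forall (j : 'I_r) (k : int), - m j + 1 <= k <= n j ->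
                  Lapp c j (- M - k) (N - k) (mulXz Phis (- k)) = 0]),
   (* (iii) *)
   D <-> (exists! Xi : 'I_r -> int -> R[i],
            [/\ forall j, in_span 0 (- n j) (m j - 1) (Xi j),
                forall k : int, - N + 1 <= k <= M - 1 ->
                  \sum_(j < r) Lapp c j (- n j - k) (m j - 1 - k)
                                  (mulXz (Xi j) (- k)) = 0 &
                \sum_(j < r) Lapp c j (- n j + N) (m j - 1 + N)
                                (mulXz (Xi j) N) = 1]) &
   (* (iv) *)
   D <-> (exists! Xis : 'I_r -> int -> R[i],
            [/\ forall j, in_span 0 (- n j + 1) (m j) (Xis j),
                forall k : int, - N + 1 <= k <= M - 1 ->
                  \sum_(j < r) Lapp c j (- n j + 1 - k) (m j - k)
                                  (mulXz (Xis j) (- k)) = 0 &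
                \sum_(j < r) Lapp c j (- n j + 1 - M) (m j - M)
                                (mulXz (Xis j) (- M)) = 1])].

Proof.
move=> hr hnm hnot N M D.
pose x0 : 'I_r * int := (Ordinal hr, 0).
have hS : (0 < absz (vsum n + vsum m)%R)%N.
  rewrite lt0n; apply/negP => /eqP h0; apply: hnot => j.
  have h1 : \sum_j (n j + m j) = 0 by rewrite -(vsumD n m) -(S_int hnm) h0.
  have := @psumr_eq0P _ _ _ _ (fun j _ => hnm j) h1 j isT.
  by move/eqP; rewrite addr_eq0 => /eqP.
rewrite /D /N /M; split.
- exact: (case1 c hnm x0).
- exact: (case2 c hnm x0).
- exact: (case3 c hnm x0 hS).
- exact: (case4 c hnm x0 hS).
Qed.
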